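(* Suppose $V \models \mathsf{ZFC}^- + \mathsf{DC}_{<\mathrm{Ord}}$. Then for any proper class $\mathcal{C}$ definable over $V$ and any non-zero ordinal $\gamma$, there is a definable surjection of $\mathcal{C}$ onto $\gamma$.
   Context: $\mathsf{ZFC}^-$ denotes the theory with axioms Empty Set, Extensionality, Pairing, Union, Infinity, the Foundation, Separation, Replacement and Collection Schemes, and the Well-Ordering Principle (no Power Set). $\mathsf{ZFC}^- + \mathsf{DC}_{<\mathrm{Ord}}$ is $\mathsf{ZFC}^-$ together with the $\mathsf{DC}_\mu$-Scheme for every infinite cardinal $\mu$, where the $\mathsf{DC}_\mu$-Scheme states: for all formulas $\varphi,\psi$ and sets $u,w$, if there is $y$ with $\psi(y,u)$ and for every $\alpha < \mu$ and every sequence $s = \langle x_\beta : \beta < \alpha\rangle$ with $\psi(x_\beta,u)$ for all $\beta$ there is $z$ with $\psi(z,u)$ and $\varphi(s,z,w)$, then there is a function $f$ with domain $\mu$ such that for each $\alpha < \mu$, $\psi(f(\alpha),u)$ and $\varphi(f\restriction\alpha, f(\alpha), w)$. *)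

(* Defs.v *)
(* A model V of set theory is a type M with a binary
   relation E (E x y  means  x \in y).  First-order formulas in the language
   {\in, =} are a deep embedding with de Bruijn variables; parameters are
   supplied by an environment.  Axiom schemes are stated semantically:
   "V satisfies every instance (with every choice of parameters)". *)

Inductive form : Type :=
| FMem : nat -> nat -> form
| FEq  : nat -> nat -> form
| FFalse : form
| FNot : form -> form
| FAnd : form -> form -> form
| FOr  : form -> form -> form
| FImp : form -> form -> form
| FAll : form -> form            (* binds v_0 *)
| FEx  : form -> form.

Definition scons {M : Type} (x : M) (rho : nat -> M) : nat -> M :=
  fun n => match n with 0 => x | S k => rho k end.

Fixpoint sat {M : Type} (E : M -> M -> Prop) (rho : nat -> M) (f : form) : Prop :=
  match f with
  | FMem i j => E (rho i) (rho j)
  | FEq i j => rho i = rho j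
  | FFalse => False
  | FNot g => ~ sat E rho g
  | FAnd g h => sat E rho g /\ sat E rho h
  | FOr g h => sat E rho g \/ sat E rho h
  | FImp g h => sat E rho g -> sat E rho h
  | FAll g => forall x, sat E (scons x rho) g
  | FEx g => exists x, sat E (scons x rho) g
  end.

Definition sat1 {M} (E : M -> M -> Prop) (phi : form) (rho : nat -> M) (x : M) : Prop :=
  sat E (scons x rho) phi.
Definition sat2 {M} (E : M -> M -> Prop) (phi : form) (rho : nat -> M) (x y : M) : Prop :=
  sat E (scons x (scons y rho)) phi.

Section Internal.
Context {M : Type} (E : M -> M -> Prop).

Definition is_empty (a : M) : Prop := forall z, ~ E z a.
Definition is_upair (p a b : M) : Prop := forall z, E z p <-> (z = a \/ z = b).
Definition is_opair (p a b : M) : Prop :=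
  forall z, E z p <-> (is_upair z a a \/ is_upair z a b).
Definition is_union (u a : M) : Prop := forall z, E z u <-> exists y, E y a /\ E z y.
Definition is_succ (s a : M) : Prop := forall z, E z s <-> (E z a \/ z = a).
Definition transitive (a : M) : Prop := forall y z, E z y -> E y a -> E z a.

Definition rel (r x y : M) : Prop := exists p, E p r /\ is_opair p x y.

Definition well_orders (r a : M) : Prop :=
  (forall x, E x a -> ~ rel r x x) /\
  (forall x y z, E x a -> E y a -> E z a -> rel r x y -> rel r y z -> rel r x z) /\
  (forall x y, E x a -> E y a -> x = y \/ rel r x y \/ rel r y x) /\
  (forall b, (forall z, E z b -> E z a) -> (exists z, E z b) ->
     exists m, E m b /\ forall z, E z b -> ~ rel r z m).

Definition ordinal (a : M) : Prop :=
  transitive a /\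
  (forall x, E x a -> ~ E x x) /\
  (forall x y z, E x a -> E y a -> E z a -> E x y -> E y z -> E x z) /\
  (forall x y, E x a -> E y a -> x = y \/ E x y \/ E y x) /\
  (forall b, (forall z, E z b -> E z a) -> (exists z, E z b) ->
     exists m, E m b /\ forall z, E z b -> ~ E z m).

Definition is_function_on (f d : M) : Prop :=
  (forall p, E p f -> exists x y, is_opair p x y /\ E x d) /\
  (forall x, E x d -> exists y, rel f x y /\ forall y', rel f x y' -> y' = y).

Definition is_restriction (g f a : M) : Prop :=
  forall p, E p g <-> (E p f /\ exists x y, is_opair p x y /\ E x a).

Definition equinumerous (a b : M) : Prop :=
  exists f, is_function_on f a /\
    (forall x x' y, rel f x y -> rel f x' y -> x = x') /\
    (forall y, E y b <-> exists x, E x a /\ rel f x y).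

Definition natural_number (n : M) : Prop :=
  ordinal n /\ forall y, (E y n \/ y = n) -> (is_empty y \/ exists z, is_succ y z).

Definition cardinal (m : M) : Prop :=
  ordinal m /\ forall a, E a m -> ~ equinumerous a m.

Definition infinite_cardinal (m : M) : Prop :=
  cardinal m /\ ~ (exists n, natural_number n /\ equinumerous n m).

Definition Ax_Empty : Prop := exists x, is_empty x.
Definition Ax_Ext : Prop := forall a b, (forall z, E z a <-> E z b) -> a = b.
Definition Ax_Pair : Prop := forall a b, exists p, is_upair p a b.
Definition Ax_Union : Prop := forall a, exists u, is_union u a.
Definition Ax_Inf : Prop :=
  exists x, (exists e, is_empty e /\ E e x) /\
    forall y, E y x -> exists s, is_succ s y /\ E s x.
Definition Sch_Found : Prop :=
  forall phi rho, (exists x, sat1 E phi rho x) ->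
    exists x, sat1 E phi rho x /\ forall y, E y x -> ~ sat1 E phi rho y.
Definition Sch_Sep : Prop :=
  forall phi rho a, exists b, forall x, E x b <-> (E x a /\ sat1 E phi rho x).
(* phi(y, x): v_0 = y (value), v_1 = x (argument) *)
Definition Sch_Repl : Prop :=
  forall phi rho a,
    (forall x, E x a -> exists y, sat2 E phi rho y x /\
                        forall y', sat2 E phi rho y' x -> y' = y) ->
    exists b, forall y, E y b <-> exists x, E x a /\ sat2 E phi rho y x.
Definition Sch_Coll : Prop :=
  forall phi rho a,
    (forall x, E x a -> exists y, sat2 E phi rho y x) ->
    exists b, forall x, E x a -> exists y, E y b /\ sat2 E phi rho y x.
Definition Ax_WO : Prop := forall a, exists r, well_orders r a.

Definition ZFCminus : Prop :=
  Ax_Empty /\ Ax_Ext /\ Ax_Pair /\ Ax_Union /\ Ax_Inf /\ Sch_Found /\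
  Sch_Sep /\ Sch_Repl /\ Sch_Coll /\ Ax_WO.

(* DC_mu scheme.  psi(y; u): v_0 = y.  phi(z, s; w): v_0 = z, v_1 = s.
   Parameters u, w are given by environments rho_psi, rho_phi. *)
Definition DC_scheme (mu : M) : Prop :=
  forall phi psi rho_phi rho_psi,
    (exists y, sat1 E psi rho_psi y) ->
    (forall al s, E al mu -> is_function_on s al ->
       (forall b x, E b al -> rel s b x -> sat1 E psi rho_psi x) ->
       exists z, sat1 E psi rho_psi z /\ sat2 E phi rho_phi z s) ->
    exists f, is_function_on f mu /\
      forall al, E al mu ->
        exists y g, rel f al y /\ is_restriction g f al /\
          sat1 E psi rho_psi y /\ sat2 E phi rho_phi y g.

Definition DC_ltOrd : Prop := forall mu, infinite_cardinal mu -> DC_scheme mu.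

Definition proper_class (theta : form) (rho : nat -> M) : Prop :=
  ~ exists c, forall x, E x c <-> sat1 E theta rho x.

Definition definable_surjection_onto (theta : form) (rho : nat -> M)
    (sigma : form) (rho' : nat -> M) (g : M) : Prop :=
  (forall y x, sat2 E sigma rho' y x -> sat1 E theta rho x) /\
  (forall x, sat1 E theta rho x ->
     exists y, E y g /\ sat2 E sigma rho' y x /\
       forall y', sat2 E sigma rho' y' x -> y' = y) /\
  (forall y, E y g -> exists x, sat1 E theta rho x /\ sat2 E sigma rho' y x).

End Internal.

(* Main.v *)
Require Import Defs.
From Stdlib Require Import Setoid Classical.


Definition FIff g h := FAnd (FImp g h) (FImp h g).

Definition upr (xi : nat -> nat) : nat -> nat :=
  fun n => match n with 0 => 0 | S k => S (xi k) end.
Fixpoint ren (xi : nat -> nat) (f : form) : form :=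
  match f with
  | FMem i j => FMem (xi i) (xi j)
  | FEq i j => FEq (xi i) (xi j)
  | FFalse => FFalse
  | FNot g => FNot (ren xi g)
  | FAnd g h => FAnd (ren xi g) (ren xi h)
  | FOr g h => FOr (ren xi g) (ren xi h)
  | FImp g h => FImp (ren xi g) (ren xi h)
  | FAll g => FAll (ren (upr xi) g)
  | FEx g => FEx (ren (upr xi) g)
  end.

Lemma sat_ext {M} (E : M -> M -> Prop) f : forall rho rho',
  (forall n, rho n = rho' n) -> (sat E rho f <-> sat E rho' f).
Proof.
  induction f; intros rho rho' H; simpl;
    try (rewrite ?H; tauto);
    try (rewrite (IHf rho rho' H); tauto);
    try (rewrite (IHf1 rho rho' H), (IHf2 rho rho' H); tauto).
  - split; intros H1 x; specialize (H1 x);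
      [rewrite <- (IHf (scons x rho) (scons x rho')) | rewrite (IHf (scons x rho) (scons x rho'))];
      auto; intros [|n]; simpl; auto.
  - split; intros [x H1]; exists x;
      [rewrite <- (IHf (scons x rho) (scons x rho')) | rewrite (IHf (scons x rho) (scons x rho'))];
      auto; intros [|n]; simpl; auto.
Qed.

Lemma sat_ren {M} (E : M -> M -> Prop) f : forall xi rho,
  sat E rho (ren xi f) <-> sat E (fun n => rho (xi n)) f.
Proof.
  induction f; intros xi rho; simpl; try tauto;
    try (rewrite IHf; tauto);
    try (rewrite IHf1, IHf2; tauto).
  - split; intros H1 x; specialize (H1 x).
    + rewrite IHf in H1. revert H1; apply sat_ext; intros [|n]; reflexivity.
    + rewrite IHf. revert H1; apply sat_ext; intros [|n]; reflexivity.
  - split; intros [x H1]; exists x.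
    + rewrite IHf in H1. revert H1; apply sat_ext; intros [|n]; reflexivity.
    + rewrite IHf. revert H1; apply sat_ext; intros [|n]; reflexivity.
Qed.

Definition F_upair z a b := FAll (FIff (FMem 0 (S z)) (FOr (FEq 0 (S a)) (FEq 0 (S b)))).
Definition F_opair p a b := FAll (FIff (FMem 0 (S p))
   (FOr (F_upair 0 (S a) (S a)) (F_upair 0 (S a) (S b)))).
Definition F_rel r x y := FEx (FAnd (FMem 0 (S r)) (F_opair 0 (S x) (S y))).
Definition F_funon f d :=
  FAnd (FAll (FImp (FMem 0 (S f)) (FEx (FEx (FAnd (F_opair 2 1 0) (FMem 1 (S (S (S d)))))))))
       (FAll (FImp (FMem 0 (S d)) (FEx (FAnd (F_rel (S (S f)) 1 0)
          (FAll (FImp (F_rel (S (S (S f))) 2 0) (FEq 0 1))))))).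
Definition F_equi a b :=
  FEx (FAnd (F_funon 0 (S a)) (FAnd
    (FAll (FAll (FAll (FImp (F_rel 3 2 0) (FImp (F_rel 3 1 0) (FEq 2 1))))))
    (FAll (FIff (FMem 0 (S (S b))) (FEx (FAnd (FMem 0 (S (S (S a)))) (F_rel 2 0 1))))))).
Arguments F_upair : simpl never.
Arguments F_opair : simpl never.
Arguments F_rel : simpl never.
Arguments F_funon : simpl never.
Arguments F_equi : simpl never.

Section Fm.
Context {M : Type} (E : M -> M -> Prop).

Lemma sat_upair env z a b : sat E env (F_upair z a b) <-> is_upair E (env z) (env a) (env b).
Proof. unfold F_upair, FIff, is_upair; simpl. firstorder. Qed.

Lemma sat_opair env p a b : sat E env (F_opair p a b) <-> is_opair E (env p) (env a) (env b).
Proof. unfold F_opair, F_upair, FIff, is_opair, is_upair; simpl. firstorder. Qed.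

Lemma sat_rel env r x y : sat E env (F_rel r x y) <-> rel E (env r) (env x) (env y).
Proof. unfold F_rel, F_opair, F_upair, FIff, rel, is_opair, is_upair; simpl. firstorder. Qed.

Lemma sat_funon env f d : sat E env (F_funon f d) <-> is_function_on E (env f) (env d).
Proof. unfold F_funon, F_rel, F_opair, F_upair, FIff, is_function_on, rel, is_opair, is_upair; simpl.
  firstorder. Qed.

Lemma sat_equi env a b : sat E env (F_equi a b) <-> equinumerous E (env a) (env b).
Proof. unfold F_equi, F_funon, F_rel, F_opair, F_upair, FIff, equinumerous, is_function_on, rel, is_opair, is_upair; simpl.
  firstorder. Qed.
End Fm.


Section ST.
Context {M : Type} (E : M -> M -> Prop) (HZ : ZFCminus E).

Lemma ax_ext : Ax_Ext E. Proof. apply HZ. Qed.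
Lemma ax_pair : Ax_Pair E. Proof. apply HZ. Qed.
Lemma ax_union : Ax_Union E. Proof. apply HZ. Qed.
Lemma ax_empty : Ax_Empty E. Proof. apply HZ. Qed.
Lemma ax_inf : Ax_Inf E. Proof. apply HZ. Qed.
Lemma sch_found : Sch_Found E. Proof. apply HZ. Qed.
Lemma sch_sep : Sch_Sep E. Proof. apply HZ. Qed.
Lemma sch_repl : Sch_Repl E. Proof. apply HZ. Qed.

Lemma extP a b : (forall z, E z a <-> E z b) -> a = b.
Proof. apply ax_ext. Qed.

Lemma upair_unique p q a b : is_upair E p a b -> is_upair E q a b -> p = q.
Proof. unfold is_upair; intros H1 H2; apply extP; intro z; rewrite H1, H2; tauto. Qed.

Lemma opair_unique p q a b : is_opair E p a b -> is_opair E q a b -> p = q.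
Proof. unfold is_opair; intros H1 H2; apply extP; intro z; rewrite H1, H2; tauto. Qed.

Lemma succ_unique p q a : is_succ E p a -> is_succ E q a -> p = q.
Proof. unfold is_succ; intros H1 H2; apply extP; intro z; rewrite H1, H2; tauto. Qed.

Lemma opair_exists a b : exists p, is_opair E p a b.
Proof.
  destruct (ax_pair a a) as [u1 Hu1]. destruct (ax_pair a b) as [u2 Hu2].
  destruct (ax_pair u1 u2) as [p Hp]. exists p. intro z. rewrite (Hp z). split.
  - intros [H|H]; subst; auto.
  - intros [H|H]; [left|right]; eapply upair_unique; eauto.
Qed.

Lemma opair_inj p a b c d : is_opair E p a b -> is_opair E p c d -> a = c /\ b = d.
Proof.
  intros H1 H2.
  assert (Hac : a = c).
  { destruct (ax_pair a a) as [u Hu].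
    assert (E u p) by (apply H1; auto).
    apply H2 in H. destruct H as [H|H];
      assert (E c u) by (apply H; auto); apply Hu in H0; destruct H0; auto. }
  subst c. split; auto.
  destruct (ax_pair a b) as [v Hv]. destruct (ax_pair a d) as [w Hw].
  assert (Ev : E v p) by (apply H1; auto). assert (Ew : E w p) by (apply H2; auto).
  apply H2 in Ev. apply H1 in Ew.
  assert (Hb : E b v) by (apply Hv; auto). assert (Hd : E d w) by (apply Hw; auto).
  destruct Ev as [Ev|Ev]; apply Ev in Hb; destruct Ew as [Ew|Ew]; apply Ew in Hd;
    destruct Hb; destruct Hd; subst; auto.
Qed.

Lemma rel_inj r x y p : E p r -> is_opair E p x y -> rel E r x y.
Proof. intros; exists p; auto. Qed.

Lemma found_min b : (exists z, E z b) -> exists m, E m b /\ forall z, E z b -> ~ E z m.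
Proof.
  intros [z Hz].
  destruct (sch_found (FMem 0 1) (fun _ => b)) as [m [Hm H]].
  - exists z. exact Hz.
  - exists m; split; [exact Hm|]. intros y Hy Hym. exact (H y Hym Hy).
Qed.

Lemma not_self x : ~ E x x.
Proof.
  intro Hx.
  destruct (sch_found (FEq 0 1) (fun _ => x)) as [m [Hm H]].
  - exists x. reflexivity.
  - unfold sat1 in Hm; simpl in Hm. subst m. exact (H x Hx eq_refl).
Qed.

Lemma sep (phi : form) rho a : exists b, forall x, E x b <-> (E x a /\ sat1 E phi rho x).
Proof. apply sch_sep. Qed.

Lemma ord_trans a : ordinal E a -> Defs.transitive E a. Proof. intros H; apply H. Qed.

Lemma ord_elem a x : ordinal E a -> E x a -> ordinal E x.
Proof.
  intros [Ht [H2 [H3 [H4 H5]]]] Hx. repeat split.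
  - intros y z Hzy Hyx. assert (E y a) by eauto. assert (E z a) by eauto. eauto.
  - intros y Hy. apply H2. eauto.
  - intros u v w Hu Hv Hw. apply H3; eauto.
  - intros u v Hu Hv. apply H4; eauto.
  - intros b Hb Hne. apply H5; eauto.
Qed.

Lemma ord_of a : Defs.transitive E a -> (forall x, E x a -> ordinal E x) ->
  (forall x y, E x a -> E y a -> x = y \/ E x y \/ E y x) -> ordinal E a.
Proof.
  intros Ht Ho Htri. repeat split; auto.
  - intros x _; apply not_self.
  - intros x y z _ _ Hz Hxy Hyz. destruct (Ho z Hz) as [Htz _]. eauto.
  - intros b _ Hne. apply found_min; auto.
Qed.

Lemma sub_mem a d : ordinal E a -> Defs.transitive E d -> (forall z, E z d -> E z a) -> d <> a -> E d a.
Proof.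
  intros Ha Hd Hsub Hne.
  destruct (sep (FNot (FMem 0 1)) (fun _ => d) a) as [c Hc].
  assert (Hc' : forall x, E x c <-> E x a /\ ~ E x d) by (intro x; rewrite Hc; unfold sat1; simpl; tauto).
  assert (Hex : exists z, E z c).
  { apply NNPP; intro Hn. apply Hne. apply extP. intro z. split; auto.
    intro Hz. apply NNPP; intro Hzd. apply Hn. exists z. apply Hc'; auto. }
  destruct Ha as [Hta [H2 [H3 [H4 H5]]]].
  destruct (H5 c (fun z Hz => proj1 (proj1 (Hc' z) Hz)) Hex) as [m [Hm Hmin]].
  apply Hc' in Hm. destruct Hm as [Hma Hmd].
  assert (m = d).
  { apply extP. intro z. split.
    - intro Hz. assert (E z a) by eauto. apply NNPP; intro Hzd. apply (Hmin z); auto. apply Hc'; auto.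
    - intro Hz. assert (Hza : E z a) by auto. destruct (H4 z m Hza Hma) as [->|[H|H]]; auto.
      + contradiction.
      + exfalso. apply Hmd. eauto. }
  subst; auto.
Qed.

Lemma ord_tri a b : ordinal E a -> ordinal E b -> E a b \/ a = b \/ E b a.
Proof.
  intros Ha Hb.
  destruct (sep (FMem 0 1) (fun _ => b) a) as [d Hd].
  assert (Hd' : forall x, E x d <-> E x a /\ E x b) by (intro x; rewrite Hd; unfold sat1; simpl; tauto).
  assert (Htd : Defs.transitive E d).
  { intros y z Hzy Hyd. apply Hd' in Hyd. apply Hd'. destruct Hyd.
    split; eapply ord_trans; eauto. }
  destruct (classic (d = a)) as [Hda|Hda]; destruct (classic (d = b)) as [Hdb|Hdb].
  - right; left; congruence.
  - left. subst d. apply sub_mem; auto. intros z Hz; apply Hd' in Hz; apply Hz.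
  - right; right. subst d. apply sub_mem; auto. intros z Hz; apply Hd' in Hz; apply Hz.
  - exfalso. assert (E d a) by (apply sub_mem; auto; intros z Hz; apply Hd' in Hz; apply Hz).
    assert (E d b) by (apply sub_mem; auto; intros z Hz; apply Hd' in Hz; apply Hz).
    apply (not_self d). apply Hd'; auto.
Qed.

Lemma ord_of' a : Defs.transitive E a -> (forall x, E x a -> ordinal E x) -> ordinal E a.
Proof.
  intros Ht Ho. apply ord_of; auto. intros x y Hx Hy.
  destruct (ord_tri x y (Ho x Hx) (Ho y Hy)) as [H|[H|H]]; auto.
Qed.

Lemma ord_succ a s : ordinal E a -> is_succ E s a -> ordinal E s.
Proof.
  intros Ha Hs. apply ord_of'.
  - intros y z Hzy Hys. apply Hs in Hys. apply Hs. left. destruct Hys as [H| ->].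
    + eapply ord_trans; eauto.
    + auto.
  - intros x Hx. apply Hs in Hx. destruct Hx as [H| ->]; [eapply ord_elem|]; eauto.
Qed.

Lemma ord_le_sub a b : ordinal E b -> (E a b \/ a = b) -> forall z, E z a -> E z b.
Proof. intros Hb [H| ->] z Hz; auto. eapply ord_trans; eauto. Qed.

Lemma nat_elem n y : natural_number E n -> (E y n \/ y = n) -> natural_number E y.
Proof.
  intros [Ho Hn] Hy. split.
  - destruct Hy as [H| ->]; [eapply ord_elem|]; eauto.
  - intros w Hw. apply Hn. destruct Hy as [Hy| ->]; auto.
    left. destruct Hw as [Hw| ->]; auto. eapply ord_trans; eauto.
Qed.

End ST.


Opaque F_upair F_opair F_rel F_funon F_equi.
Section ST2.
Context {M : Type} (E : M -> M -> Prop) (HZ : ZFCminus E).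

Definition xi_g (n : nat) : nat := match n with 0 => 0 | 1 => 2 | S (S k) => S (S (S k)) end.

Lemma graph (psi : form) rho a :
  (forall x, E x a -> exists y, sat2 E psi rho y x /\ forall y', sat2 E psi rho y' x -> y' = y) ->
  exists k, (forall p, E p k -> exists x y, is_opair E p x y /\ E x a) /\
    (forall x y, rel E k x y <-> E x a /\ sat2 E psi rho y x).
Proof.
  intros Hf.
  set (chi := FEx (FAnd (ren xi_g psi) (F_opair 1 2 0))).
  assert (Hchi : forall q x, sat2 E chi rho q x <-> exists y, sat2 E psi rho y x /\ is_opair E q x y).
  { intros q x. unfold chi, sat2. simpl. split; intros [y [H1 H2]]; exists y.
    - rewrite sat_ren in H1. rewrite sat_opair in H2. simpl in H2. split; auto.
      revert H1; apply sat_ext. intros [|[|n]]; reflexivity.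
    - rewrite sat_ren, sat_opair. simpl. split; auto.
      revert H1; apply sat_ext. intros [|[|n]]; reflexivity. }
  destruct (sch_repl E HZ chi rho a) as [k Hk].
  { intros x Hx. destruct (Hf x Hx) as [y [Hy Hu]].
    destruct (opair_exists E HZ x y) as [q Hq]. exists q. split.
    - apply Hchi. eauto.
    - intros q' Hq'. apply Hchi in Hq'. destruct Hq' as [y' [Hy' Hq']].
      apply Hu in Hy'. subst. eapply opair_unique; eauto. }
  exists k. split.
  - intros p Hp. apply Hk in Hp. destruct Hp as [x [Hx Hc]]. apply Hchi in Hc.
    destruct Hc as [y [_ Hq]]. eauto.
  - intros x y. split.
    + intros [p [Hp Hpo]]. apply Hk in Hp. destruct Hp as [x0 [Hx0 Hc]]. apply Hchi in Hc.
      destruct Hc as [y0 [Hy0 Hq]]. destruct (opair_inj E HZ _ _ _ _ _ Hpo Hq). subst. auto.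
    + intros [Hx Hy]. destruct (opair_exists E HZ x y) as [q Hq]. exists q. split; auto.
      apply Hk. exists x. split; auto. apply Hchi. eauto.
Qed.

Lemma rel_dom f d x y : is_function_on E f d -> rel E f x y -> E x d.
Proof.
  intros [H1 _] [p [Hp Ho]]. destruct (H1 p Hp) as [x0 [y0 [Ho' Hx0]]].
  destruct (opair_inj E HZ _ _ _ _ _ Ho Ho'); subst; auto.
Qed.

Lemma fun_val f d x y y' : is_function_on E f d -> rel E f x y -> rel E f x y' -> y = y'.
Proof.
  intros Hf H1 H2. assert (Hx : E x d) by (eapply rel_dom; eauto).
  destruct Hf as [_ Hf]. destruct (Hf x Hx) as [z [_ Hz]].
  rewrite (Hz y H1), (Hz y' H2). reflexivity.
Qed.

Lemma equi_refl a : equinumerous E a a.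
Proof.
  destruct (graph (FEq 0 1) (fun _ => a) a) as [k [Hk1 Hk2]].
  { intros x Hx. exists x. unfold sat2; simpl. split; auto. }
  assert (Hr : forall x y, rel E k x y <-> E x a /\ y = x).
  { intros x y. rewrite Hk2. unfold sat2; simpl. tauto. }
  exists k. split; [split|split].
  - exact Hk1.
  - intros x Hx. exists x. split; [apply Hr; auto|]. intros y' Hy'. apply Hr in Hy'. apply Hy'.
  - intros x x' y H1 H2. apply Hr in H1. apply Hr in H2. destruct H1, H2; congruence.
  - intros y. split.
    + intros Hy. exists y. split; auto. apply Hr. auto.
    + intros [x [Hx Hxy]]. apply Hr in Hxy. destruct Hxy; subst; auto.
Qed.

Lemma equi_trans a b c : equinumerous E a b -> equinumerous E b c -> equinumerous E a c.
Proof.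
  intros [g [Hg [Hgi Hgr]]] [h [Hh [Hhi Hhr]]].
  set (psi := FEx (FAnd (F_rel 3 2 0) (F_rel 4 0 1))).
  set (rho := scons g (scons h (fun _ => g))).
  assert (Hpsi : forall y x, sat2 E psi rho y x <-> exists u, rel E g x u /\ rel E h u y).
  { intros y x. unfold psi, sat2. simpl. setoid_rewrite sat_rel. simpl. tauto. }
  destruct (graph psi rho a) as [k [Hk1 Hk2]].
  { intros x Hx. destruct Hg as [_ Hg2]. destruct (Hg2 x Hx) as [u [Hu Huu]].
    assert (Hub : E u b) by (apply Hgr; eauto).
    destruct Hh as [_ Hh2]. destruct (Hh2 u Hub) as [y [Hy Hyu]].
    exists y. split.
    - apply Hpsi. eauto.
    - intros y' Hy'. apply Hpsi in Hy'. destruct Hy' as [u' [H1 H2]].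
      apply Huu in H1. subst u'. apply Hyu; auto. }
  assert (Hr : forall x y, rel E k x y <-> E x a /\ exists u, rel E g x u /\ rel E h u y).
  { intros x y. rewrite Hk2, Hpsi. tauto. }
  exists k. split; [split|split].
  - exact Hk1.
  - intros x Hx. destruct Hg as [_ Hg2]. destruct (Hg2 x Hx) as [u [Hu Huu]].
    assert (Hub : E u b) by (apply Hgr; eauto).
    destruct Hh as [_ Hh2]. destruct (Hh2 u Hub) as [y [Hy Hyu]].
    exists y. split; [apply Hr; eauto|].
    intros y' Hy'. apply Hr in Hy'. destruct Hy' as [_ [u' [H1 H2]]].
    apply Huu in H1. subst u'. apply Hyu; auto.
  - intros x x' y H1 H2. apply Hr in H1. apply Hr in H2.
    destruct H1 as [_ [u [H1 H1']]]. destruct H2 as [_ [u' [H2 H2']]].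
    assert (u = u') by (eapply Hhi; eauto). subst u'. eapply Hgi; eauto.
  - intros y. split.
    + intros Hy. apply Hhr in Hy. destruct Hy as [u [Hu Huy]]. apply Hgr in Hu.
      destruct Hu as [x [Hx Hxu]]. exists x. split; auto. apply Hr. eauto.
    + intros [x [Hx Hxy]]. apply Hr in Hxy. destruct Hxy as [_ [u [H1 H2]]].
      apply Hhr. exists u. split; auto. apply Hgr. eauto.
Qed.

End ST2.


Definition F_ord i :=
  FAnd (FAll (FAll (FImp (FMem 0 1) (FImp (FMem 1 (S (S i))) (FMem 0 (S (S i)))))))
  (FAnd (FAll (FAll (FAll (FImp (FMem 2 (S (S (S i)))) (FImp (FMem 1 (S (S (S i))))
           (FImp (FMem 0 (S (S (S i)))) (FImp (FMem 2 1) (FImp (FMem 1 0) (FMem 2 0)))))))))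
        (FAll (FAll (FImp (FMem 1 (S (S i))) (FImp (FMem 0 (S (S i)))
           (FOr (FEq 1 0) (FOr (FMem 1 0) (FMem 0 1)))))))).

Opaque F_upair F_opair F_rel F_funon F_equi.

Section ST3.
Context {M : Type} (E : M -> M -> Prop) (HZ : ZFCminus E).

Lemma sat_ord env i : sat E env (F_ord i) <-> ordinal E (env i).
Proof.
  unfold F_ord; simpl. split.
  - intros [H1 [H3 H4]]. repeat split.
    + intros y z Hzy Hy. eapply H1; eauto.
    + intros x _. apply not_self; auto.
    + intros x y z Hx Hy Hz. eapply H3; eauto.
    + intros x y Hx Hy. apply H4; auto.
    + intros b _ Hne. apply found_min; auto.
  - intros [Ht [_ [H3 [H4 _]]]]. split; [|split].
    + intros y z Hzy Hy. eapply Ht; eauto.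
    + intros x y z Hx Hy Hz. eapply H3; eauto.
    + intros x y Hx Hy. apply H4; auto.
Qed.

Opaque F_ord.
Lemma omega_exists : exists w, ordinal E w /\ (exists e, E e w) /\
  (forall v, E v w -> exists s, is_succ E s v /\ E s w) /\ ~ natural_number E w.
Proof.
  destruct (ax_inf E HZ) as [x0 [[e [He Hex]] Hcl]].
  destruct (sep E HZ (FAnd (F_ord 0) (FAll (FImp (FMem 0 1) (FMem 0 2)))) (fun _ => x0) x0) as [w Hw].
  assert (Hw' : forall v, E v w <-> E v x0 /\ ordinal E v /\ forall z, E z v -> E z x0).
  { intro v. rewrite Hw. unfold sat1. simpl. rewrite sat_ord. simpl. tauto. }
  assert (Hcl' : forall v, E v w -> exists s, is_succ E s v /\ E s w).
  { intros v Hv. apply Hw' in Hv. destruct Hv as [Hv0 [Hvo Hvs]].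
    destruct (Hcl v Hv0) as [s [Hs Hs0]]. exists s. split; auto. apply Hw'.
    split; [auto|split]. - eapply ord_succ; eauto. - intros z Hz. apply Hs in Hz. destruct Hz as [Hz| ->]; auto. }
  assert (Hwo : ordinal E w).
  { apply (ord_of' E HZ).
    - intros y z Hzy Hyw. apply Hw' in Hyw. destruct Hyw as [Hy0 [Hyo Hys]]. apply Hw'.
      split; [auto|split]. + eapply ord_elem; eauto. + intros u Hu. apply Hys. exact (ord_trans E y Hyo z u Hu Hzy).
    - intros v Hv. apply Hw' in Hv. apply Hv. }
  assert (Hew : E e w).
  { apply Hw'. split; [exact Hex|split].
    - apply (ord_of' E HZ); [intros y z H1 H2|intros x H1]; exfalso; eapply He; eauto.
    - intros z Hz; exfalso; eapply He; eauto. }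
  exists w. split; [auto|split; [eauto|split; [auto|]]].
  intros [_ Hn]. destruct (Hn w (or_intror eq_refl)) as [Hemp|[z Hz]].
  - eapply Hemp; eauto.
  - assert (Hzw : E z w) by (apply Hz; auto). destruct (Hcl' z Hzw) as [s [Hs Hsw]].
    assert (s = w) by (eapply succ_unique; eauto). subst s. eapply not_self; eauto.
Qed.

Definition Tsw (k ys a c : M) : Prop :=
  (a = k /\ c = ys) \/ (a = ys /\ c = k) \/ (a <> k /\ a <> ys /\ c = a).

Lemma Tsw_fun k ys a c c' : k <> ys -> Tsw k ys a c -> Tsw k ys a c' -> c = c'.
Proof. unfold Tsw; intros; intuition congruence. Qed.
Lemma Tsw_inj k ys a a' c : k <> ys -> Tsw k ys a c -> Tsw k ys a' c -> a = a'.
Proof. unfold Tsw; intros; intuition congruence. Qed.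
Lemma Tsw_tot k ys a : exists c, Tsw k ys a c.
Proof.
  unfold Tsw. destruct (classic (a = k)) as [->|H1]; [eauto|].
  destruct (classic (a = ys)) as [->|H2]; eauto 10.
Qed.

Lemma swap_exists f k ys : k <> ys -> (forall p, E p f -> exists a b, is_opair E p a b) ->
  exists f', (forall q, E q f' -> exists a b, is_opair E q a b) /\
    forall c x, rel E f' c x <-> exists a, Tsw k ys a c /\ rel E f a x.
Proof.
  intros Hne Hap.
  set (chi := FEx (FEx (FEx (FAnd (F_opair 4 2 1) (FAnd (F_opair 3 0 1)
     (FOr (FAnd (FEq 2 5) (FEq 0 6)) (FOr (FAnd (FEq 2 6) (FEq 0 5))
        (FAnd (FNot (FEq 2 5)) (FAnd (FNot (FEq 2 6)) (FEq 0 2)))))))))).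
  set (rho := scons k (scons ys (fun _ => k))).
  assert (Hchi : forall q p, sat2 E chi rho q p <->
     exists a b c, is_opair E p a b /\ is_opair E q c b /\ Tsw k ys a c).
  { intros q p. unfold chi, sat2, Tsw. simpl. setoid_rewrite sat_opair. simpl. tauto. }
  destruct (sch_repl E HZ chi rho f) as [f' Hf'].
  { intros p Hp. destruct (Hap p Hp) as [a [b Hab]]. destruct (Tsw_tot k ys a) as [c Hc].
    destruct (opair_exists E HZ c b) as [q Hq]. exists q. split.
    - apply Hchi. eauto 10.
    - intros q' Hq'. apply Hchi in Hq'. destruct Hq' as [a' [b' [c' [H1 [H2 H3]]]]].
      destruct (opair_inj E HZ _ _ _ _ _ Hab H1). subst a' b'.
      assert (c' = c) by (eapply Tsw_fun; eauto). subst c'. eapply opair_unique; eauto. }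
  exists f'. split.
  - intros q Hq. apply Hf' in Hq. destruct Hq as [p [_ Hc]]. apply Hchi in Hc.
    destruct Hc as [a [b [c [_ [H _]]]]]. eauto.
  - intros c x. split.
    + intros [q [Hq Hqo]]. apply Hf' in Hq. destruct Hq as [p [Hp Hc]]. apply Hchi in Hc.
      destruct Hc as [a [b [c0 [H1 [H2 H3]]]]].
      destruct (opair_inj E HZ _ _ _ _ _ Hqo H2). subst c0 b.
      exists a. split; auto. exists p; auto.
    + intros [a [Ht [p [Hp Hpo]]]]. destruct (opair_exists E HZ c x) as [q Hq].
      exists q. split; auto. apply Hf'. exists p. split; auto. apply Hchi. eauto 10.
Qed.

Definition PH (v f : M) : Prop :=
  (forall p, E p f -> exists a b, is_opair E p a b) /\
  (forall x, (E x v \/ x = v) -> exists y, E y v /\ rel E f y x) /\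
  (forall y x x', rel E f y x -> rel E f y x' -> x = x').

Lemma php m0 f : natural_number E m0 -> PH m0 f -> False.
Proof.
  intros Hm0 Hf.
  set (Phi := FAnd (FOr (FMem 0 1) (FEq 0 1)) (FEx (FAnd
     (FAll (FImp (FMem 0 1) (FEx (FEx (F_opair 2 1 0)))))
     (FAnd (FAll (FImp (FOr (FMem 0 2) (FEq 0 2)) (FEx (FAnd (FMem 0 3) (F_rel 2 0 1)))))
           (FAll (FAll (FAll (FImp (F_rel 3 2 1) (FImp (F_rel 3 2 0) (FEq 1 0)))))))))).
  assert (HPhi : forall v, sat1 E Phi (fun _ => m0) v <-> (E v m0 \/ v = m0) /\ exists f, PH v f).
  { intro v. unfold Phi, sat1, PH. simpl. setoid_rewrite sat_opair. setoid_rewrite sat_rel. simpl. tauto. }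
  destruct (sch_found E HZ Phi (fun _ => m0)) as [m [Hm Hmin]].
  { exists m0. apply HPhi. eauto. }
  destruct (proj1 (HPhi m) Hm) as [Hmm0 [g [Hap [Hcov Hfun]]]].
  assert (Hmn : natural_number E m) by (eapply nat_elem; eauto).
  destruct (Hcov m (or_intror eq_refl)) as [ys [Hys Hysm]].
  destruct Hmn as [_ Hmn]. destruct (Hmn m (or_intror eq_refl)) as [Hemp|[k Hk]].
  { eapply Hemp; eauto. }
  assert (Hkm : E k m) by (apply Hk; auto).
  apply (Hmin k Hkm). apply HPhi. split.
  { left. destruct Hm0 as [Ho _]. exact (ord_le_sub E m m0 Ho Hmm0 k Hkm). }
  assert (Hxm : forall x, (E x k \/ x = k) -> E x m) by (intros x Hx; apply Hk; auto).
  assert (Hnotm : forall x, E x m -> rel E g ys x -> False).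
  { intros x Hx Hr. assert (Hxm' : x = m) by exact (Hfun ys x m Hr Hysm). rewrite Hxm' in Hx. exact (not_self E HZ m Hx). }
  destruct (classic (ys = k)) as [->|Hne].
  - exists g. split; [auto|split; [|auto]].
    intros x Hx. apply Hxm in Hx. destruct (Hcov x (or_introl Hx)) as [y [Hy Hyx]].
    exists y. split; auto. apply Hk in Hy. destruct Hy as [Hy| ->]; auto.
    exfalso. eapply Hnotm; eauto.
  - assert (Hysk : E ys k) by (apply Hk in Hys; destruct Hys; [auto|congruence]).
    assert (Hkys : k <> ys) by congruence.
    destruct (swap_exists g k ys Hkys Hap) as [g' [Hap' Hr']].
    exists g'. split; [auto|split].
    + intros x Hx. apply Hxm in Hx. destruct (Hcov x (or_introl Hx)) as [y [Hy Hyx]].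
      destruct (Tsw_tot k ys y) as [c Hc]. exists c. split.
      * destruct Hc as [[H1 H2]|[[H1 H2]|[H1 [H2 H3]]]].
        -- rewrite H2; exact Hysk.
        -- exfalso. rewrite H1 in Hyx. exact (Hnotm x Hx Hyx).
        -- rewrite H3. apply Hk in Hy. destruct Hy; [auto|congruence].
      * apply Hr'. eauto.
    + intros c x x' H1 H2. apply Hr' in H1. apply Hr' in H2.
      destruct H1 as [a [Ha Hax]]. destruct H2 as [a' [Ha' Hax']].
      assert (a = a') by (eapply Tsw_inj; eauto). subst a'. eapply Hfun; eauto.
Qed.

End ST3.


Opaque F_upair F_opair F_rel F_funon F_equi.

Definition xi_t (n : nat) : nat := match n with 0 => 1 | S k => 6 + k end.

Theorem corollary6p5 (M : Type) (E : M -> M -> Prop) :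
  ZFCminus E -> DC_ltOrd E ->
  forall (theta : form) (rho : nat -> M), proper_class E theta rho ->
  forall gamma : M, ordinal E gamma -> ~ is_empty E gamma ->
  exists (sigma : form) (rho' : nat -> M),
    definable_surjection_onto E theta rho sigma rho' gamma.
Proof.
  intros HZ HDC theta rho Hpc gamma Hg Hgne.
  assert (He : exists e, E e gamma).
  { apply NNPP; intro Hn; apply Hgne; intros z Hz; apply Hn; eauto. }
  destruct He as [e He].
  destruct (omega_exists E HZ) as [w [Hwo [[e0 He0] [Hwcl Hwn]]]].
  assert (Hdel : exists d, ordinal E d /\ (forall z, E z gamma -> E z d) /\ (forall z, E z w -> E z d)).
  { destruct (ord_tri E HZ gamma w Hg Hwo) as [H|[H|H]].
    - exists w. split; [auto|split; [|auto]]. intros z Hz. exact (ord_trans E w Hwo gamma z Hz H).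
    - subst. exists w. auto.
    - exists gamma. split; [auto|split; [auto|]]. intros z Hz. exact (ord_trans E gamma Hg w z Hz H). }
  destruct Hdel as [d [Hdo [Hgd Hwd]]].
  set (Phi := FAnd (FOr (FMem 0 1) (FEq 0 1)) (F_equi 0 1)).
  assert (HPhi : forall v, sat1 E Phi (fun _ => d) v <-> (E v d \/ v = d) /\ equinumerous E v d).
  { intro v. unfold Phi, sat1. simpl. rewrite sat_equi. simpl. tauto. }
  destruct (sch_found E HZ Phi (fun _ => d)) as [mu [Hmu Hmin]].
  { exists d. apply HPhi. split; auto. apply equi_refl; auto. }
  destruct (proj1 (HPhi mu) Hmu) as [Hmud [h Hh]].
  assert (Hmuo : ordinal E mu).
  { destruct Hmud as [H| ->]; [eapply ord_elem; eauto|auto]. }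
  assert (Hinf : infinite_cardinal E mu).
  { split; [split; [auto|]|].
    - intros a Ha Hae. apply (Hmin a Ha). apply HPhi. split.
      + left. exact (ord_le_sub E mu d Hdo Hmud a Ha).
      + eapply equi_trans; eauto. exists h; exact Hh.
    - intros [n [Hn Hne]].
      assert (Hnd : equinumerous E n d) by (eapply equi_trans; eauto; exists h; exact Hh).
      destruct (ord_tri E HZ n w (proj1 Hn) Hwo) as [H|[H|H]].
      + destruct (Hwcl n H) as [s [Hs Hsw]].
        destruct Hnd as [k [Hk [Hki Hkr]]].
        apply (php E HZ n k Hn). split; [|split].
        * intros p Hp. destruct Hk as [Hk1 _]. destruct (Hk1 p Hp) as [a [b [Hab _]]]. eauto.
        * intros x Hx. assert (Hxs : E x s) by (apply Hs; exact Hx).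
          assert (Hxd : E x d) by exact (ord_trans E d Hdo s x Hxs (Hwd s Hsw)).
          apply Hkr in Hxd. exact Hxd.
        * intros y x x' H1 H2. eapply fun_val; eauto.
      + subst n. contradiction.
      + apply Hwn. eapply nat_elem; eauto. }
  set (phi := FNot (FEx (FAnd (FMem 0 2) (FEx (F_opair 1 0 2))))).
  assert (Hphi : forall z s, sat2 E phi (fun _ => mu) z s <-> ~ exists a, rel E s a z).
  { intros z s. unfold phi, sat2, rel. simpl. setoid_rewrite sat_opair. simpl.
    split; intros H1 H2; apply H1.
    - destruct H2 as [a [p [H3 H4]]]. exists p. split; [exact H3|]. exists a. exact H4.
    - destruct H2 as [p [H3 [a H4]]]. exists a, p. split; assumption. }
  destruct (HDC mu Hinf phi theta (fun _ => mu) rho) as [f [Hf Hfv]].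
  { apply NNPP; intro Hn. destruct (ax_empty E HZ) as [c0 Hc0]. apply Hpc. exists c0.
    intro x. split; intro H.
    - exfalso; eapply Hc0; eauto.
    - exfalso; apply Hn; eauto. }
  { intros al s Hal Hs Hsv. apply NNPP; intro Hn.
    destruct (ax_union E HZ s) as [u1 Hu1]. destruct (ax_union E HZ u1) as [u2 Hu2].
    destruct (sep E HZ theta rho u2) as [c Hc]. apply Hpc. exists c. intro x. rewrite Hc.
    split; [tauto|]. intro Hx. split; auto.
    assert (Hr : exists a, rel E s a x).
    { apply NNPP; intro Hr. apply Hn. exists x. split; auto. apply Hphi. exact Hr. }
    destruct Hr as [a [p [Hp Hpo]]].
    destruct (ax_pair E HZ a x) as [u Hu].
    assert (Hup : E u p) by (apply Hpo; right; exact Hu).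
    assert (Hxu : E x u) by (apply Hu; right; reflexivity).
    apply Hu2. exists u. split; auto. apply Hu1. exists p. auto. }
  assert (Hfdom : forall a x, rel E f a x -> E a mu) by (intros; eapply rel_dom; eauto).
  assert (Hfth : forall a x, rel E f a x -> sat1 E theta rho x).
  { intros a x Hax. destruct (Hfv a (Hfdom a x Hax)) as [y [g [Hy [_ [Hty _]]]]].
    assert (x = y) by (eapply fun_val; eauto). subst; auto. }
  assert (Hfinj1 : forall a a' x, E a a' -> E a' mu -> rel E f a x -> rel E f a' x -> False).
  { intros a a' x Haa' Ha' H1 H2. destruct (Hfv a' Ha') as [y [g [Hy [Hg' [_ Hgy]]]]].
    assert (x = y) by (eapply fun_val; eauto). subst y.
    apply Hphi in Hgy. apply Hgy. exists a. destruct H1 as [p [Hp Hpo]].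
    exists p. split; auto. apply Hg'. split; auto. eauto. }
  assert (Hfinj : forall a a' x, rel E f a x -> rel E f a' x -> a = a').
  { intros a a' x H1 H2. assert (Ha := Hfdom _ _ H1). assert (Ha' := Hfdom _ _ H2).
    destruct Hmuo as [_ [_ [_ [H4 _]]]]. destruct (H4 a a' Ha Ha') as [H|[H|H]]; auto.
    - exfalso; eapply Hfinj1; eauto.
    - exfalso; eapply Hfinj1; eauto. }
  destruct Hh as [Hhf [Hhi Hhr]].
  set (sigma := FAnd (ren xi_t theta) (FOr
      (FEx (FAnd (F_rel 3 0 2) (FAnd (F_rel 4 0 1) (FMem 1 5))))
      (FAnd (FNot (FEx (FEx (FAnd (F_rel 4 1 3) (FAnd (F_rel 5 1 0) (FMem 0 6)))))) (FEq 0 5)))).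
  set (rho' := scons f (scons h (scons gamma (scons e rho)))).
  assert (Hsig : forall y x, sat2 E sigma rho' y x <-> sat1 E theta rho x /\
     ((exists a, rel E f a x /\ rel E h a y /\ E y gamma) \/
      (~ (exists a b, rel E f a x /\ rel E h a b /\ E b gamma) /\ y = e))).
  { intros y x. unfold sigma, sat2, sat1. simpl. rewrite sat_ren.
    setoid_rewrite sat_rel. simpl.
    assert (Ht : sat E (fun n => scons y (scons x rho') (xi_t n)) theta <-> sat E (scons x rho) theta).
    { apply sat_ext. intros [|n]; reflexivity. }
    rewrite Ht. tauto. }
  exists sigma, rho'. split; [|split].
  - intros y x H. apply Hsig in H. apply H.
  - intros x Hx.
    destruct (classic (exists a b, rel E f a x /\ rel E h a b /\ E b gamma)) as [Hc|Hc].
    + destruct Hc as [a [b [H1 [H2 H3]]]]. exists b. split; [auto|split].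
      * apply Hsig. split; auto. left; exists a; auto.
      * intros y' Hy'. apply Hsig in Hy'. destruct Hy' as [_ [[a' [H1' [H2' _]]]|[Hn _]]].
        -- assert (a' = a) by exact (Hfinj a' a x H1' H1). subst a'. exact (fun_val E HZ h mu a y' b Hhf H2' H2).
        -- exfalso; apply Hn; exists a, b; auto.
    + exists e. split; [auto|split].
      * apply Hsig. split; auto.
      * intros y' Hy'. apply Hsig in Hy'. destruct Hy' as [_ [[a' [H1' [H2' H3']]]|[_ He']]]; auto.
        exfalso; apply Hc; exists a', y'; auto.
  - intros y Hy. assert (Hyd : E y d) by auto. apply Hhr in Hyd. destruct Hyd as [a [Ha Hay]].
    destruct Hf as [_ Hf2]. destruct (Hf2 a Ha) as [x [Hax _]].
    exists x. split; [exact (Hfth a x Hax)|]. apply Hsig. split; [exact (Hfth a x Hax)|]. left; exists a; auto.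
Qed.
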